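(* Let $T,S>0$. The concatenation map $\theta:\mathcal C_0([0,T],\mathfrak a)\otimes\mathcal C_0([0,S],\mathfrak a)\to\mathcal C_0([0,T+S],\mathfrak a)$, $\pi_1\otimes\pi_2\mapsto\pi_1\ast\pi_2$, is a crystal isomorphism. More precisely, for all $\pi_1,\pi_2$, $\alpha\in\Delta$ and $c\in\mathbb R$: (i) $\gamma(\pi_1\ast\pi_2)=\gamma(\pi_1\otimes\pi_2)$; (ii) $\varepsilon_\alpha(\pi_1\ast\pi_2)=\varepsilon_\alpha(\pi_1\otimes\pi_2)$ (equivalently $\varphi_\alpha(\pi_1\ast\pi_2)=\varphi_\alpha(\pi_1\otimes\pi_2)$); (iii) $e^c_\alpha\cdot(\pi_1\ast\pi_2)=\theta(e^c_\alpha\cdot(\pi_1\otimes\pi_2))$.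
   Context: $\mathfrak a$ is the real Cartan subalgebra of a complex semisimple Lie algebra, $\Delta$ its simple roots, $\alpha^\vee$ the coroot of $\alpha$. For $T>0$, $\mathcal C_0([0,T],\mathfrak a)$ (continuous paths with $\pi(0)=0$) carries the geometric crystal structure: $\gamma(\pi)=\pi(T)$, $\varepsilon_\alpha(\pi)=\log\int_0^Te^{-\alpha(\pi(s))}ds$, $\varphi_\alpha(\pi)=\alpha(\pi(T))+\varepsilon_\alpha(\pi)$, $(e^c_\alpha\cdot\pi)(t)=\pi(t)+\log\big(1+(e^c-1)e^{-\varepsilon_\alpha(\pi)}\int_0^te^{-\alpha(\pi(s))}ds\big)\alpha^\vee$. The tensor product $X\otimes Y$ of two such crystals is $X\times Y$ with $\gamma(x\otimes y)=\gamma(x)+\gamma(y)$, $\varepsilon_\alpha(x\otimes y)=\varepsilon_\alpha(x)+\log(1+e^{\varepsilon_\alpha(y)-\varphi_\alpha(x)})$, $\varphi_\alpha(x\otimes y)=\varphi_\alpha(y)+\log(1+e^{\varphi_\alpha(x)-\varepsilon_\alpha(y)})$, $e^c_\alpha(x\otimes y)=e^{c_1}_\alpha x\otimes e^{c_2}_\alpha y$ with $e^{c_1}=\frac{e^{c+\varphi_\alpha(x)}+e^{\varepsilon_\alpha(y)}}{e^{\varphi_\alpha(x)}+e^{\varepsilon_\alpha(y)}}$, $e^{c_2}=\frac{e^{\varphi_\alpha(x)}+e^{\varepsilon_\alpha(y)}}{e^{\varphi_\alpha(x)}+e^{-c+\varepsilon_\alpha(y)}}$. Concatenation: $(\pi_1\ast\pi_2)(t)=\pi_1(t)$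 for $0\le t\le T$ and $\pi_1(T)+\pi_2(t-T)$ for $T\le t\le T+S$. A crystal isomorphism is a bijection preserving $\gamma,\varepsilon_\alpha,\varphi_\alpha$ and commuting with all $e^c_\alpha$, whose inverse has the same properties. *)

(* Defs.v *)
From HB Require Import structures.
From mathcomp Require Import all_boot all_order all_algebra.
From mathcomp Require Import all_classical all_reals all_analysis.
Set Implicit Arguments. Unset Strict Implicit. Unset Printing Implicit Defensive.
Import Order.TTheory GRing.Theory Num.Theory.
Import numFieldNormedType.Exports.
Local Open Scope classical_set_scope.
Local Open Scope ring_scope.

(* The real Cartan subalgebra a is modelled as 'rV[R]_n (n = rank).
   A simple root alpha_i is a linear functional, given by a column vector;
   its value at x : a is [pairing x (alpha i)]. The coroot alpha_i^vee is a
   vector of a. *)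
Definition pairing (R : realType) (n : nat) (x : 'rV[R]_n) (a : 'cV[R]_n) : R :=
  (x *m a) 0 0.

Definition cartan_entry (R : realType) (n : nat)
  (alpha : 'I_n -> 'cV[R]_n) (coroot : 'I_n -> 'rV[R]_n) (i j : 'I_n) : R :=
  pairing (coroot i) (alpha j).

(* (alpha_i)_i, (alpha_i^vee)_i are the simple roots / coroots of a complex
   semisimple Lie algebra (with a = real span of the coroots): the coroots form a
   basis of a and the Cartan matrix is a Cartan matrix of finite type
   (integer entries, 2 on the diagonal, nonpositive off the diagonal,
   A_ij = 0 <-> A_ji = 0, symmetrizable with positive definite symmetrization). *)
Definition semisimple_root_datum (R : realType) (n : nat)
  (alpha : 'I_n -> 'cV[R]_n) (coroot : 'I_n -> 'rV[R]_n) : Prop :=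
  let A := cartan_entry alpha coroot in
  row_free (\matrix_(i < n) coroot i) /\
  [/\ (forall i, A i i = 2),
      (forall i j, exists z : int, A i j = z%:~R),
      (forall i j, i != j -> A i j <= 0),
      (forall i j, A i j = 0 <-> A j i = 0) &
      (exists dd : 'I_n -> R,
          (forall i, 0 < dd i) /\
          (forall i j, dd i * A i j = dd j * A j i) /\
          (forall x : 'I_n -> R, (exists i, x i != 0) ->
              0 < \sum_(i < n) \sum_(j < n) x i * dd i * A i j * x j))].

(* Paths: functions R -> a; pi is an element of C_0([0,T], a) when it is
   continuous on [0,T] and pi 0 = 0. Only the values on [0,T] matter. *)
Definition is_path (R : realType) (n : nat) (T : R) (pi : R -> 'rV[R]_n) : Prop :=
  {within `[0, T], continuous pi} /\ pi 0 = 0.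

Definition path_eq (R : realType) (n : nat) (T : R) (p q : R -> 'rV[R]_n) : Prop :=
  forall t, 0 <= t <= T -> p t = q t.

Definition Iexp (R : realType) (n : nat) (a : 'cV[R]_n) (pi : R -> 'rV[R]_n) (t : R) : R :=
  \int[@lebesgue_measure R]_(s in `[0, t]) expR (- pairing (pi s) a).

Definition gammaP (R : realType) (n : nat) (T : R) (pi : R -> 'rV[R]_n) : 'rV[R]_n :=
  pi T.

Definition epsP (R : realType) (n : nat) (a : 'cV[R]_n) (T : R) (pi : R -> 'rV[R]_n) : R :=
  ln (Iexp a pi T).

Definition phiP (R : realType) (n : nat) (a : 'cV[R]_n) (T : R) (pi : R -> 'rV[R]_n) : R :=
  pairing (pi T) a + epsP a T pi.

Definition eP (R : realType) (n : nat) (a : 'cV[R]_n) (av : 'rV[R]_n) (c : R) (T : R)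
  (pi : R -> 'rV[R]_n) : R -> 'rV[R]_n :=
  fun t => pi t + ln (1 + (expR c - 1) * expR (- epsP a T pi) * Iexp a pi t) *: av.

Definition gammaT (R : realType) (n : nat) (T S : R) (p1 p2 : R -> 'rV[R]_n) : 'rV[R]_n :=
  gammaP T p1 + gammaP S p2.

Definition epsT (R : realType) (n : nat) (a : 'cV[R]_n) (T S : R) (p1 p2 : R -> 'rV[R]_n) : R :=
  epsP a T p1 + ln (1 + expR (epsP a S p2 - phiP a T p1)).

Definition phiT (R : realType) (n : nat) (a : 'cV[R]_n) (T S : R) (p1 p2 : R -> 'rV[R]_n) : R :=
  phiP a S p2 + ln (1 + expR (phiP a T p1 - epsP a S p2)).

(* e^{c1}, e^{c2} as in the tensor product rule; c1 c2 are their logarithms. *)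
Definition c1T (R : realType) (n : nat) (a : 'cV[R]_n) (c T S : R) (p1 p2 : R -> 'rV[R]_n) : R :=
  ln ((expR (c + phiP a T p1) + expR (epsP a S p2))
      / (expR (phiP a T p1) + expR (epsP a S p2))).

Definition c2T (R : realType) (n : nat) (a : 'cV[R]_n) (c T S : R) (p1 p2 : R -> 'rV[R]_n) : R :=
  ln ((expR (phiP a T p1) + expR (epsP a S p2))
      / (expR (phiP a T p1) + expR (- c + epsP a S p2))).

Definition eT (R : realType) (n : nat) (a : 'cV[R]_n) (av : 'rV[R]_n) (c T S : R)
  (p1 p2 : R -> 'rV[R]_n) : (R -> 'rV[R]_n) * (R -> 'rV[R]_n) :=
  (eP a av (c1T a c T S p1 p2) T p1, eP a av (c2T a c T S p1 p2) S p2).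

Definition concat (R : realType) (n : nat) (T : R) (p1 p2 : R -> 'rV[R]_n) : R -> 'rV[R]_n :=
  fun t => if t <= T then p1 t else p1 T + p2 (t - T).

(* Main.v *)
Require Import Defs.
From HB Require Import structures.
From mathcomp Require Import all_boot all_order all_algebra.
From mathcomp Require Import all_classical all_reals all_analysis.
From mathcomp Require Import ring lra.
Import Order.TTheory GRing.Theory Num.Theory.
Import numFieldNormedType.Exports.
Local Open Scope classical_set_scope.
Local Open Scope ring_scope.
Section H.
Variables (R : realType) (n : nat).
Lemma pairing_cont (a : 'cV[R]_n) : continuous (fun x : 'rV[R]_n => pairing x a).
Proof.
rewrite /pairing.
have -> : (fun x : 'rV[R]_n => (x *m a) 0 0) = (fun x => \sum_j (x 0 j * a j 0)).
  by apply/funext => x; rewrite mxE.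
apply: continuous_big.
  exact: add_continuous.
move=> j _ x; apply: continuousM; last exact: cst_continuous.
exact: coord_continuous.
Qed.

Lemma within_comp (A B : set R) (V : topologicalType) (f : R -> V) (g : R -> R) :
  {within B, continuous f} -> continuous g -> (forall x, A x -> B (g x)) ->
  {within A, continuous (f \o g)}.
Proof.
move=> /subspace_continuousP cf cg AB; apply/subspace_continuousP => x Ax.
move=> P /= fP.
have := cf _ (AB _ Ax) P fP.
rewrite /within /= => h.
have h2 := cg x _ h.
move: h2; rewrite /= /from_subspace /= => h2.
change (nbhs x (fun y => A y -> P (f (g y)))).
change (nbhs x (fun y => B (g y) -> P (f (g y)))) in h2.
by apply: filterS h2 => y Hy Ay; exact: Hy (AB _ Ay).
Qed.

Lemma expp_cont (a : 'cV[R]_n) : continuous (fun x : 'rV[R]_n => expR (- pairing x a)).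
Proof.
move=> x; apply: (continuous_comp (f := fun x => - pairing x a)); last exact: continuous_expR.
apply: (continuous_comp (f := fun x => pairing x a)); first exact: pairing_cont.
exact: opp_continuous.
Qed.

Lemma integrand_cont L (p : R -> 'rV[R]_n) a : is_path L p ->
  {within `[0, L], continuous (fun s => expR (- pairing (p s) a))}.
Proof.
move=> [cp _] x.
exact: (continuous_comp (cp x) (expp_cont a (p x))).
Qed.

Lemma integrand_int L (p : R -> 'rV[R]_n) a t : is_path L p -> t <= L ->
  (@lebesgue_measure R).-integrable `[0, t] (EFin \o (fun s => expR (- pairing (p s) a))).
Proof.
move=> hp tL; apply: continuous_compact_integrable; first exact: segment_compact.
have h1 := integrand_cont _ _ a hp. move: h1; apply: continuous_subspaceW.
by move=> x /=; rewrite !in_itv /= => /andP[-> /le_trans]; apply.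
Qed.

Lemma Iexp_ge0 (p : R -> 'rV[R]_n) a t : 0 <= Iexp a p t.
Proof. by apply: Rintegral_ge0 => x _; exact: expR_ge0. Qed.

Lemma Iexp_mono L (p : R -> 'rV[R]_n) a t : is_path L p -> 0 <= t <= L ->
  Iexp a p t <= Iexp a p L.
Proof.
move=> hp /andP[t0 tL]; rewrite /Iexp -subr_ge0.
rewrite (@Rintegral_itvB _ _ (BLeft 0) (BRight L) t) ?bnd_simp//.
  by apply: Rintegral_ge0 => x _; exact: expR_ge0.
exact: (integrand_int _ _ a L hp (lexx L)).
Qed.

Lemma Iexp_gt0 L (p : R -> 'rV[R]_n) a : is_path L p -> 0 < L -> 0 < Iexp a p L.
Proof.
move=> hp L0.
have [c c0L cmin] := EVT_min (ltW L0) (integrand_cont _ _ a hp).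
set m := expR (- pairing (p c) a).
have m0 : 0 < m by exact: expR_gt0.
apply: (@lt_le_trans _ _ (\int[@lebesgue_measure R]_(s in `[0, L]) m)).
  rewrite Rintegral_cst//= lebesgue_measure_itv /= lte_fin L0 /= subr0.
  by rewrite mulr_gt0.
apply: le_Rintegral => //.
- apply: continuous_compact_integrable; first exact: segment_compact.
  by apply: continuous_subspaceT => x; exact: cst_continuous.
- exact: (integrand_int _ _ a L hp (lexx L)).
Qed.

Lemma concat_alt T (p1 p2 : R -> 'rV[R]_n) : p2 0 = 0 ->
  concat T p1 p2 = fun t => p1 (Num.min t T) + p2 (Num.max (t - T) 0).
Proof.
move=> p20; apply/funext => t; rewrite /concat.
case: (leP t T) => tT.
  have -> : Num.max (t - T) 0 = 0 by apply/max_idPr; rewrite subr_le0.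
  by rewrite p20 addr0.
by rewrite (max_idPl _)// subr_ge0 ltW.
Qed.

Lemma concat_path T S (p1 p2 : R -> 'rV[R]_n) : 0 < T -> 0 < S ->
  is_path T p1 -> is_path S p2 -> is_path (T + S) (concat T p1 p2).
Proof.
move=> T0 S0 [c1 z1] [c2 z2]; split; last first.
  by rewrite /concat ifT ?ltW.
rewrite concat_alt//.
apply: within_continuousD.
- apply: (within_comp _ `[0, T]%classic) => //.
    move=> x; apply: continuous_min => //; exact: cst_continuous.
  move=> x /=; rewrite !in_itv /= => /andP[x0 _].
  by rewrite ge_min lexx orbT le_min x0 ltW.
- apply: (within_comp _ `[0, S]%classic) => //.
    move=> x; apply: (continuous_max (f := fun x0 => x0 - T) (g := fun=> 0)); last exact: cst_continuous.
    apply: continuousB; [by [] | exact: cst_continuous].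
  move=> x /=; rewrite !in_itv /= => /andP[_ xTS].
  by rewrite le_max lexx orbT ge_max lerBlDl xTS ltW.
Qed.

Lemma pairingD (x y : 'rV[R]_n) a : pairing (x + y) a = pairing x a + pairing y a.
Proof. by rewrite /pairing mulmxDl mxE. Qed.

Lemma lnK' (x : R) : 0 < x -> expR (ln x) = x.
Proof. by move=> x0; rewrite lnK // posrE. Qed.

Lemma pairing0 a : pairing (0 : 'rV[R]_n) a = 0.
Proof. by rewrite /pairing mul0mx mxE. Qed.

Lemma Iexp_concat_le T (p1 p2 : R -> 'rV[R]_n) a t : t <= T ->
  Iexp a (concat T p1 p2) t = Iexp a p1 t.
Proof.
move=> tT; rewrite /Iexp; apply: eq_Rintegral => s.
rewrite inE /= in_itv /= => /andP[_ st].
by rewrite /concat (le_trans st tT).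
Qed.

Lemma dshift (T : R) : ((fun x : R => x + T)^`())%classic = fun=> 1.
Proof.
apply/funext => x; rewrite derive.derive1E.
have -> : (fun x : R => x + T) = (id + cst T)%R by [].
rewrite deriveD ?derive_id ?derive_cst ?addr0//.
Qed.


Lemma Iexp_concat_gt T S (p1 p2 : R -> 'rV[R]_n) a t : 0 < T -> 0 < S ->
  is_path T p1 -> is_path S p2 -> T < t -> t <= T + S ->
  Iexp a (concat T p1 p2) t =
  Iexp a p1 T + expR (- pairing (p1 T) a) * Iexp a p2 (t - T).
Proof.
move=> T0 S0 hp1 hp2 Tt tTS.
have hc := concat_path _ _ _ _ T0 S0 hp1 hp2.
set g := fun s => expR (- pairing (concat T p1 p2 s) a).
have ig := integrand_int _ _ a t hc tTS.
have := @Rintegral_itvB _ g (BLeft 0) (BRight t) T ig.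
rewrite !bnd_simp (ltW T0) (ltW Tt) => /(_ isT isT) /eqP.
rewrite subr_eq => /eqP; rewrite /Iexp -/g => ->.
have e1 : \int[@lebesgue_measure R]_(s in `[0, T]) g s = Iexp a p1 T.
  apply: eq_Rintegral => s; rewrite inE /= in_itv /= => /andP[_ st].
  by rewrite /g /concat st.
rewrite e1 (addrC _ (Iexp a p1 T)); apply: congr1.
rewrite Rintegral_itv_obnd_cbnd; last first.
  apply: integrableS ig => //; apply: subset_itvr; rewrite bnd_simp ltW//.
have cG : {within `[0 + T, t - T + T], continuous g}.
  rewrite add0r subrK; apply: continuous_subspaceW (integrand_cont _ _ a hc).
  move=> x /=; rewrite !in_itv /= => /andP[Tx xt].
  by rewrite (le_trans (ltW T0) Tx) (le_trans xt tTS).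
have tT0 : 0 <= t - T by rewrite subr_ge0 ltW.
have sub := @integration_by_substitution_increasing R (fun x => x + T) g 0 (t - T) tT0.
rewrite dshift in sub.
rewrite /= add0r subrK in sub.
rewrite -RintegralZl//; last first.
  by apply: (integrand_int _ _ a (t - T) hp2); rewrite lerBlDl.
rewrite /Rintegral sub; last first.
- by move: cG; rewrite add0r subrK.
- split.
  + move=> x _; have -> : (fun x : R => x + T) = (id + cst T)%R by [].
    by apply: derivableD; [exact: derivable_id | exact: derivable_cst].
  + apply: cvg_at_right_filter; apply: cvgD; [exact: cvg_id | exact: cvg_cst].
  + apply: cvg_at_left_filter; apply: cvgD; [exact: cvg_id | exact: cvg_cst].
- exact: is_cvg_cst.
- exact: is_cvg_cst.
- by move=> x _; exact: cst_continuous.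
- by move=> x y _ _ xy; rewrite ltrD2r.
congr fine; apply: eq_integral => x; rewrite inE /= in_itv /= => /andP[x0 xt].
congr EFin; rewrite /g /= mulr1 /concat.
rewrite /comp.
case: (leP (x + T) T) => xT.
  have x00 : x = 0 by apply/eqP; rewrite eq_le x0 andbT -(lerD2r T) add0r.
  by rewrite x00 add0r (proj2 hp2) pairing0 oppr0 expR0 mulr1.
by rewrite addrK pairingD opprD expRD.
Qed.


Lemma posY (E I J : R) : 0 < E -> 0 < I -> 0 <= J <= I -> 0 < 1 + (E - 1) * I^-1 * J.
Proof.
move=> E0 I0 /andP[J0 JI].
have -> : 1 + (E - 1) * I^-1 * J = (I - J + E * J) / I.
  by field; rewrite lt0r_neq0.
apply: divr_gt0 => //.
case: (leP E 1) => E1; nra.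
Qed.


Lemma alg_eps (I I1 I2 k : R) : 0 < I1 -> 0 < I2 -> I = I1 + expR (- k) * I2 ->
  ln I = ln I1 + ln (1 + expR (ln I2 - (k + ln I1))).
Proof.
move=> I10 I20 ->.
have Ek := expR_gt0 k.
rewrite -lnM ?posrE; last 2 first.
- exact: I10.
- by apply: addr_gt0; [exact: ltr01 | exact: expR_gt0].
congr ln; rewrite ?expRD ?expRN ?expRD ?lnK' //.
field; apply/andP; split; exact: lt0r_neq0.
Qed.

Lemma alg_phi (I I1 I2 k k2 : R) : 0 < I1 -> 0 < I2 -> I = I1 + expR (- k) * I2 ->
  (k + k2) + ln I = k2 + ln I2 + ln (1 + expR (k + ln I1 - ln I2)).
Proof.
move=> I10 I20 hI.
have Ek := expR_gt0 k.
have P1 : 0 < 1 + expR (k + ln I1 - ln I2).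
  by apply: addr_gt0; [exact: ltr01 | exact: expR_gt0].
have P0 : 0 < I.
  rewrite hI; apply: addr_gt0; [exact: I10 | apply: mulr_gt0; [exact: expR_gt0 | exact: I20]].
have hu : expR (k + ln I1 - ln I2) = expR k * I1 / I2.
  by rewrite !expRD expRN (lnK' _ I20) (lnK' _ I10).
move: P1; set u := expR (k + ln I1 - ln I2) => P1.
apply: expR_inj; rewrite !expRD (lnK' _ P0) (lnK' _ P1) (lnK' _ I20) /u hu hI expRN.
field; apply/andP; split; exact: lt0r_neq0.
Qed.

Lemma alg_e1 (I I1 I2 k c x : R) : 0 < I1 -> 0 < I2 -> I = I1 + expR (- k) * I2 ->
  (expR c - 1) * expR (- ln I) * x =
  (expR (ln ((expR (c + (k + ln I1)) + expR (ln I2)) / (expR (k + ln I1) + expR (ln I2)))) - 1)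
    * expR (- ln I1) * x.
Proof.
move=> I10 I20 hI.
have Ek := expR_gt0 k; have Ec := expR_gt0 c.
have P0 : 0 < I.
  rewrite hI; apply: addr_gt0; [exact: I10 | apply: mulr_gt0; [exact: expR_gt0 | exact: I20]].
have hE1 : expR (k + ln I1) = expR k * I1 by rewrite expRD (lnK' _ I10).
have hE2 : expR (c + (k + ln I1)) = expR c * (expR k * I1) by rewrite expRD hE1.
rewrite hE2 hE1 (lnK' _ I20).
have D0 : 0 < expR k * I1 + I2 by apply: addr_gt0 => //; apply: mulr_gt0.
have Prat : 0 < (expR c * (expR k * I1) + I2) / (expR k * I1 + I2).
  apply: divr_gt0 => //; apply: addr_gt0 => //; apply: mulr_gt0 => //; exact: mulr_gt0.
rewrite (lnK' _ Prat) !expRN (lnK' _ I10) (lnK' _ P0) hI expRN.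
by field; rewrite !lt0r_neq0.
Qed.

Lemma alg_e2 (I I1 I2 k c J : R) : 0 < I1 -> 0 < I2 -> 0 <= J <= I2 ->
  I = I1 + expR (- k) * I2 ->
  ln (1 + (expR c - 1) * expR (- ln I) * (I1 + expR (- k) * J)) =
  ln (1 + (expR (ln ((expR (c + (k + ln I1)) + expR (ln I2)) /
     (expR (k + ln I1) + expR (ln I2)))) - 1) * expR (- ln I1) * I1)
  + ln (1 + (expR (ln ((expR (k + ln I1) + expR (ln I2)) /
     (expR (k + ln I1) + expR (- c + ln I2)))) - 1) * expR (- ln I2) * J).
Proof.
move=> I10 I20 hJ hI.
have Ek := expR_gt0 k; have Ec := expR_gt0 c; have Enc : 0 < (expR c)^-1 by rewrite invr_gt0.
have P0 : 0 < I.
  rewrite hI; apply: addr_gt0; [exact: I10 | apply: mulr_gt0; [exact: expR_gt0 | exact: I20]].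
have hE1 : expR (k + ln I1) = expR k * I1 by rewrite expRD (lnK' _ I10).
have hE2 : expR (c + (k + ln I1)) = expR c * (expR k * I1) by rewrite expRD hE1.
have hE3 : expR (- c + ln I2) = (expR c)^-1 * I2 by rewrite expRD expRN (lnK' _ I20).
rewrite hE2 hE3 hE1 (lnK' _ I20).
have EI : 0 < expR k * I1 by exact: mulr_gt0.
have D0 : 0 < expR k * I1 + I2 by apply: addr_gt0.
have D1 : 0 < expR k * I1 + (expR c)^-1 * I2 by apply: addr_gt0 => //; exact: mulr_gt0.
have Pr1 : 0 < (expR c * (expR k * I1) + I2) / (expR k * I1 + I2).
  apply: divr_gt0 => //; apply: addr_gt0 => //; exact: mulr_gt0.
have Pr2 : 0 < (expR k * I1 + I2) / (expR k * I1 + (expR c)^-1 * I2).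
  exact: divr_gt0.
rewrite (lnK' _ Pr1) (lnK' _ Pr2) !expRN (lnK' _ I10) (lnK' _ I20) (lnK' _ P0).
move: Pr1 Pr2.
set r1 := (expR c * (expR k * I1) + I2) / (expR k * I1 + I2).
set r2 := (expR k * I1 + I2) / (expR k * I1 + (expR c)^-1 * I2).
move=> Pr1 Pr2.
have -> : 1 + (r1 - 1) * I1^-1 * I1 = r1 by field; rewrite lt0r_neq0.
have PY := posY _ _ _ Pr2 I20 hJ.
rewrite -lnM ?posrE; last 2 first.
- exact: Pr1.
- exact: PY.
congr ln; rewrite /r1 /r2 hI ?expRN.
have D2 : 0 < expR k * I1 * expR c + I2 by apply: addr_gt0 => //; exact: mulr_gt0.
by field; rewrite !lt0r_neq0.
Qed.
End H.
Arguments within_comp {R} A B {V} f g.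
Arguments concat_path {R n} T S p1 p2.
Arguments Iexp_gt0 {R n} L p a.
Arguments Iexp_mono {R n} L p a t.
Arguments Iexp_ge0 {R n} p a t.
Arguments Iexp_concat_le {R n} T p1 p2 a t.
Arguments Iexp_concat_gt {R n} T S p1 p2 a t.
Arguments posY {R} E I J.
Arguments pairingD {R n} x y a.
Arguments pairing0 {R n} a.
Arguments lnK' {R} x.
Arguments alg_eps {R} I I1 I2 k.
Arguments alg_phi {R} I I1 I2 k k2.
Arguments alg_e1 {R} I I1 I2 k c x.
Arguments alg_e2 {R} I I1 I2 k c J.


Theorem mainTheorem3 (R : realType) (n : nat)
  (alpha : 'I_n -> 'cV[R]_n) (coroot : 'I_n -> 'rV[R]_n)
  (Hroot : semisimple_root_datum alpha coroot)
  (T S : R) (hT : 0 < T) (hS : 0 < S) :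
  (* theta is a bijection C_0([0,T]) x C_0([0,S]) -> C_0([0,T+S]) *)
  ((forall p : R -> 'rV[R]_n, is_path (T + S) p ->
      exists p1 p2, [/\ is_path T p1, is_path S p2 & path_eq (T + S) (concat T p1 p2) p]) /\
   (forall p1 p2 q1 q2 : R -> 'rV[R]_n, is_path T p1 -> is_path S p2 ->
      is_path T q1 -> is_path S q2 ->
      path_eq (T + S) (concat T p1 p2) (concat T q1 q2) ->
      path_eq T p1 q1 /\ path_eq S p2 q2)) /\
  (* theta maps into C_0([0,T+S]) and preserves the crystal structure *)
  (forall p1 p2 : R -> 'rV[R]_n, is_path T p1 -> is_path S p2 ->
     is_path (T + S) (concat T p1 p2) /\
     gammaP (T + S) (concat T p1 p2) = gammaT T S p1 p2 /\
     forall (i : 'I_n) (c : R),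
       [/\ epsP (alpha i) (T + S) (concat T p1 p2) = epsT (alpha i) T S p1 p2,
           phiP (alpha i) (T + S) (concat T p1 p2) = phiT (alpha i) T S p1 p2 &
           path_eq (T + S)
             (eP (alpha i) (coroot i) c (T + S) (concat T p1 p2))
             (concat T (eT (alpha i) (coroot i) c T S p1 p2).1
                       (eT (alpha i) (coroot i) c T S p1 p2).2)]).
Proof.
split.
  split.
    move=> p [cp p0]; exists p, (fun s => p (s + T) - p T); split.
    - split => //; apply: continuous_subspaceW cp.
      move=> x /=; rewrite !in_itv /= => /andP[-> xT].
      by rewrite (le_trans xT)// lerDl ltW.
    - split; last by rewrite add0r subrr.
      apply: within_continuousB; last first.
        by apply: continuous_subspaceT => x; exact: cst_continuous.
      apply: (within_comp `[0, S]%classic `[0, T + S]%classic p (fun s => s + T)) => //.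
        move=> x; apply: continuousD => //; exact: cst_continuous.
      move=> x /=; rewrite !in_itv /= => /andP[x0 xS].
      by rewrite addrC lerD2l xS andbT addr_ge0 // ltW.
    - move=> t /andP[t0 tTS]; rewrite /concat; case: ifP => // _.
      by rewrite subrK addrC subrK.
  move=> p1 p2 q1 q2 [_ z1] [_ z2] [_ w1] [_ w2] heq.
  have h1T : forall t, 0 <= t <= T -> p1 t = q1 t.
    move=> t /andP[t0 tT]; have := heq t; rewrite /concat tT; apply.
    by rewrite t0 (le_trans tT)// lerDl ltW.
  split => // s /andP[s0 sS].
  case: (eqVneq s 0) => [->|sn0]; first by rewrite z2 w2.
  have s0' : 0 < s by rewrite lt_neqAle eq_sym sn0.
  have := heq (s + T); rewrite /concat.
  have -> : (s + T <= T) = false by apply/negbTE; rewrite -ltNge ltrDr.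
  rewrite addrK h1T; last by rewrite (ltW hT) lexx.
  move=> h; apply: (addrI (q1 T)); apply: h.
  by rewrite addr_ge0 ?(ltW hT)//= addrC lerD2l.
move=> p1 p2 hp1 hp2.
have hc := concat_path _ _ _ _ hT hS hp1 hp2.
split => //; split.
  rewrite /gammaP /gammaT /concat.
  have -> : (T + S <= T) = false by apply/negbTE; rewrite -ltNge ltrDl.
  by have -> : T + S - T = S by rewrite addrC addKr.
move=> i c.
have I10 := Iexp_gt0 T p1 (alpha i) hp1 hT.
have I20 := Iexp_gt0 S p2 (alpha i) hp2 hS.
have hTS : T + S - T = S by rewrite addrC addKr.
have hI : Iexp (alpha i) (concat T p1 p2) (T + S) =
    Iexp (alpha i) p1 T + expR (- pairing (p1 T) (alpha i)) * Iexp (alpha i) p2 S.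
  rewrite (Iexp_concat_gt T S p1 p2 (alpha i) (T + S) hT hS hp1 hp2); last first.
  - exact: lexx.
  - by rewrite ltrDl.
  by rewrite hTS.
have hcTS : concat T p1 p2 (T + S) = p1 T + p2 S.
  rewrite /concat.
  have -> : (T + S <= T) = false by apply/negbTE; rewrite -ltNge ltrDl.
  by rewrite hTS.
split.
- rewrite /epsT /phiP /epsP.
  exact: (alg_eps _ _ _ _ I10 I20 hI).
- rewrite /phiT /phiP /epsP hcTS pairingD.
  exact: (alg_phi _ _ _ _ _ I10 I20 hI).
- move=> t /andP[t0 tTS]; rewrite /eP /eT /c1T /c2T /phiP /epsP /=.
  case: (leP t T) => tT.
  + rewrite (alg_e1 _ _ _ _ c _ I10 I20 hI) (Iexp_concat_le T p1 p2 (alpha i) t tT).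
    by rewrite /concat tT.
  + have hJ : 0 <= Iexp (alpha i) p2 (t - T) <= Iexp (alpha i) p2 S.
      rewrite Iexp_ge0 /=; apply: (Iexp_mono S p2 (alpha i) (t - T) hp2).
      by rewrite subr_ge0 (ltW tT) /= lerBlDl.
    rewrite (Iexp_concat_gt T S p1 p2 (alpha i) t hT hS hp1 hp2 tT tTS).
    rewrite (alg_e2 _ _ _ _ c _ I10 I20 hJ hI).
    rewrite /concat.
    have -> : (t <= T) = false by apply/negbTE; rewrite -ltNge.
    by rewrite scalerDl addrACA.
Qed.
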